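(* Let $n\geq 1$ and let $X=(\pi,w)$ be a weighted permutation of degree $n$ with total weight $|w|_1=\sum_{i=1}^n w_i\leq 2$. Then $X$ and $X^\dagger$ have the same weighted cycle type.
   Context: Let $\mathfrak{S}_n$ be the symmetric group on $\{1,\ldots,n\}$. A weighted permutation of degree $n$ is a pair $(\pi,w)$ with $\pi\in\mathfrak{S}_n$ and $w=[w_1,\ldots,w_n]\in\mathbb{Z}_{\geq 0}^n$. Its involution is $(\pi,w)^\dagger=(\pi^{-1},w_{\pi^{-1}})$, where $w_{\pi^{-1}}=[w_{\pi^{-1}(1)},\ldots,w_{\pi^{-1}(n)}]$. To $(\pi,w)$ associate the edge-weighted directed graph $G(\pi,w)$ on vertex set $\{1,\ldots,n\}$ having, for each $i$, one directed edge from $i$ to $\pi(i)$ with weight $w_i$ (a disjoint union of directed cycles). The weighted cycle type of $(\pi,w)$ is the isomorphism class of $G(\pi,w)$, where two such graphs are isomorphic if there is a bijection $f$ of vertex sets such that there is an edge of weight $a$ from $v_1$ to $v_2$ iff there is an edge of weight $a$ from $f(v_1)$ to $f(v_2)$. (Equivalently, weighted cycle types are the orbits of weighted permutations under conjugation $X\mapsto (\sigma,\mathbf{0})X(\sigma^{-1},\mathbf{0})$, $\sigma\in\mathfrak{S}_n$, with multiplication $(\pi,w)\cdot(\pi',w')=(\pi\pi',w_{\pi'}+w')$, $w_{\pi'}=[w_{\pi'(1)},\ldots,w_{\pi'(n)}]$.) *)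

(* Defs.v *)
From mathcomp Require Import all_boot all_order all_fingroup.
Set Implicit Arguments. Unset Strict Implicit. Unset Printing Implicit Defensive.

(* A weighted permutation of degree n: a permutation pi of 'I_n
   (= {1..n} shifted to {0..n-1}) together with weights w : 'I_n -> nat. *)
Record wperm (n : nat) := WPerm { wp_perm : {perm 'I_n}; wp_weight : {ffun 'I_n -> nat} }.

Definition total_weight n (X : wperm n) : nat := \sum_(i : 'I_n) wp_weight X i.

Definition wdagger n (X : wperm n) : wperm n :=
  WPerm (wp_perm X)^-1%g [ffun i => wp_weight X ((wp_perm X)^-1%g i)].

(* the graph G(pi,w): for each i, one edge i -> pi(i) with weight w_i.
   [edge X v1 v2 a] <=> there is an edge of weight a from v1 to v2. *)
Definition edge n (X : wperm n) (v1 v2 : 'I_n) (a : nat) : bool :=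
  [exists i : 'I_n, [&& i == v1, wp_perm X i == v2 & wp_weight X i == a]].

(* same weighted cycle type: G(X) and G(Y) are isomorphic, i.e. there is a
   bijection f of the vertex set with edge v1 -a-> v2 iff edge f v1 -a-> f v2 *)
Definition same_wcycle_type n (X Y : wperm n) : Prop :=
  exists f : {perm 'I_n},
    forall (v1 v2 : 'I_n) (a : nat), edge X v1 v2 a = edge Y (f v1) (f v2) a.

(* Main.v *)
Require Import Defs.
From mathcomp Require Import all_boot all_order all_fingroup.
From mathcomp Require Import zify.
Set Implicit Arguments. Unset Strict Implicit. Unset Printing Implicit Defensive.

Definition hmap (T : finType) (p : {perm T}) (r s : T -> T) (x : T) : T :=
  iter (findex p (r x) (s x) + fingraph.order p (r x) - (findex p (r x) x).+1) p (r x).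

Lemma iter_mod (T : finType) (p : {perm T}) x m :
  iter m p x = iter (m %% fingraph.order p x) p x.
Proof.
rewrite {1}(divn_eq m (fingraph.order p x)) addnC iterD; congr iter.
elim: (m %/ fingraph.order p x) => [|q IH] //=.
by rewrite mulSn iterD IH (iter_order perm_inj).
Qed.

Lemma iter_addo (T : finType) (p : {perm T}) x m :
  iter (m + fingraph.order p x) p x = iter m p x.
Proof. by rewrite iterD (iter_order perm_inj). Qed.

Lemma findex_iter_mod (T : finType) (p : {perm T}) x m :
  findex p x (iter m p x) = m %% fingraph.order p x.
Proof. by rewrite iter_mod findex_iter // ltn_pmod // order_gt0. Qed.

Section G.
Variables (T : finType) (p : {perm T}) (r s : T -> T).
Hypothesis Hr1 : forall x, fconnect p (r x) x.
Hypothesis Hr2 : forall x, r (p x) = r x.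
Hypothesis Hs1 : forall x, fconnect p (r x) (s x).
Hypothesis Hs2 : forall x, s (p x) = s x.

Lemma r_iter m x : r (iter m p x) = r x.
Proof. by elim: m => //= m IH; rewrite Hr2. Qed.
Lemma s_iter m x : s (iter m p x) = s x.
Proof. by elim: m => //= m IH; rewrite Hs2. Qed.
Lemma r_idem x : r (r x) = r x.
Proof. by rewrite -{2}(iter_findex (Hr1 x)) r_iter. Qed.
Lemma s_r x : s (r x) = s x.
Proof. by rewrite -{2}(iter_findex (Hr1 x)) s_iter. Qed.

Lemma r_h x : r (hmap p r s x) = r x.
Proof. by rewrite /hmap r_iter r_idem. Qed.
Lemma s_h x : s (hmap p r s x) = s x.
Proof. by rewrite /hmap s_iter s_r. Qed.

Lemma hh x : hmap p r s (hmap p r s x) = x.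
Proof.
rewrite {1}/hmap r_h s_h /hmap findex_iter_mod.
set r0 := r x; set o := fingraph.order p r0.
have jo : findex p r0 x < o by exact: (findex_max (Hr1 x)).
have dox : findex p r0 (s x) < o by exact: (findex_max (Hs1 x)).
set j := findex p r0 x in jo *; set d := findex p r0 (s x) in dox *.
apply: (etrans _ (iter_findex (Hr1 x))); rewrite -/r0 -/j.
have o0 : 0 < o by exact: (@fingraph.order_gt0 _ p).
case: (ltnP (d + o - j.+1) o) => He.
  by rewrite modn_small //; f_equal; lia.
have -> : (d + o - j.+1) %% o = d + o - j.+1 - o.
  rewrite -{1}(subnK He) modnDr modn_small //; lia.
have -> : d + o - (d + o - j.+1 - o).+1 = j + o by lia.
by rewrite iter_addo.
Qed.

Lemma hp x : p (hmap p r s (p x)) = hmap p r s x.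
Proof.
rewrite /hmap !Hr2 Hs2.
set r0 := r x; set o := fingraph.order p r0.
have jo : findex p r0 x < o by exact: (findex_max (Hr1 x)).
have dox : findex p r0 (s x) < o by exact: (findex_max (Hs1 x)).
have o0 : 0 < o by exact: (@fingraph.order_gt0 _ p).
set j := findex p r0 x in jo *; set d := findex p r0 (s x) in dox *.
have Epx : p x = iter j.+1 p r0 by rewrite iterS /j (iter_findex (Hr1 x)).
rewrite Epx.
rewrite findex_iter_mod -/o -iterS.
case: (ltnP j.+1 o) => Hj.
  by rewrite modn_small //; have -> : (d + o - j.+2).+1 = d + o - j.+1 by lia.
have -> : j.+1 = o by lia.
rewrite modnn.
have -> : (d + o - 1).+1 = d + o by lia.
rewrite iter_addo; f_equal; lia.
Qed.

Lemma h_r x : p (hmap p r s (r x)) = s x.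
Proof.
rewrite /hmap r_idem s_r findex0.
have o0 : 0 < fingraph.order p (r x) by exact: (@fingraph.order_gt0 _ p).
rewrite -iterS.
have -> : (findex p (r x) (s x) + fingraph.order p (r x) - 1).+1 = findex p (r x) (s x) + fingraph.order p (r x) by lia.
by rewrite iter_addo iter_findex.
Qed.

Lemma h_conn x : fconnect p x (hmap p r s x).
Proof.
apply: (connect_trans _ (fconnect_iter _ _ _)).
by rewrite (fconnect_sym perm_inj).
Qed.
End G.

Section C.
Variables (T : finType) (p : {perm T}) (w : T -> nat).
Hypothesis Hw : \sum_i w i <= 2.

Definition A x := [pick e | (w e != 0) && fconnect p x e].
Definition B x a := [pick e | [&& w e != 0, fconnect p x e & e != a]].
Definition ra x := if A x is Some a then a else froot p x.
Definition sa x := if A x is Some a then p (if B x a is Some b then b else a)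
                   else froot p x.

Lemma A_p x : A (p x) = A x.
Proof. by apply: eq_pick => e /=; rewrite -(same_fconnect1 perm_inj). Qed.
Lemma B_p x a : B (p x) a = B x a.
Proof. by apply: eq_pick => e /=; rewrite -(same_fconnect1 perm_inj). Qed.
Lemma froot_p x : froot p (p x) = froot p x.
Proof. by symmetry; apply/(rootP (fconnect_sym perm_inj)); apply: fconnect1. Qed.

Lemma Hr2 x : ra (p x) = ra x.
Proof. by rewrite /ra A_p froot_p. Qed.
Lemma Hs2 x : sa (p x) = sa x.
Proof. by rewrite /sa A_p froot_p; case: (A x) => // a; rewrite B_p. Qed.

Lemma Hr1 x : fconnect p (ra x) x.
Proof.
rewrite /ra /A; case: pickP => [a /andP [_ H]|_]; first by rewrite (fconnect_sym perm_inj).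
by rewrite (fconnect_sym perm_inj) connect_root.
Qed.

Lemma Hs1 x : fconnect p (ra x) (sa x).
Proof.
rewrite /ra /sa /A /B; case: pickP => [a /andP [_ Ha]|_]; last exact: connect0.
apply: (connect_trans _ (fconnect1 _ _)).
case: pickP => [b /and3P [_ Hb _]|_]; last exact: connect0.
by apply: (connect_trans _ Hb); rewrite (fconnect_sym perm_inj).
Qed.

Lemma sum2 a b : a != b -> w a + w b <= 2.
Proof.
move=> ab; apply: leq_trans Hw.
rewrite (bigD1 a) //= (bigD1 b) /=; last by rewrite eq_sym.
lia.
Qed.

Lemma sum3 a b c : a != b -> a != c -> b != c -> w a + w b + w c <= 2.
Proof.
move=> ab ac bc; apply: leq_trans Hw.
rewrite (bigD1 a) //= (bigD1 b) /=; last by rewrite eq_sym.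
rewrite (bigD1 c) /=; last by rewrite eq_sym ac eq_sym bc.
lia.
Qed.

Definition hh' := hmap p ra sa.

Lemma h_weight x : w (hh' x) = w x.
Proof.
have Hinv := hh Hr1 Hr2 Hs1 Hs2.
have Hc := @h_conn T p ra sa Hr1 x.
have Hrr := h_r Hr1 Hr2 Hs1 Hs2 x.
rewrite -/hh' in Hinv Hc Hrr.
move: Hrr; rewrite /ra /sa /A /B.
case: pickP => [a /andP [wa xa]|H0]; last first.
  move=> _; have := H0 (hh' x); have := H0 x; rewrite Hc connect0 !andbT.
  move=> _; have := H0 (hh' x); have := H0 x; rewrite Hc connect0 !andbT.
  by move=> /negbT/negbNE/eqP -> /negbT/negbNE/eqP ->.
case: pickP => [b|H1]; [move=> /and3P [wb xb ba] /perm_inj Ha|move=> /perm_inj Ha].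
  have Hb : hh' b = a by rewrite -Ha Hinv.
  have w1 : w a = 1 /\ w b = 1.
    by have := sum2 ba; move: wa wb; lia.
  have Hthird e : w e != 0 -> e = a \/ e = b.
    move=> we; case: (eqVneq e a) => [->|ea]; first by left.
    case: (eqVneq e b) => [->|eb]; first by right.
    by have := sum3 ea eb (negbT (introF eqP (fun E => elimN eqP ba (esym E)))); move: wa wb we; lia.
  case: (eqVneq x a) => [->|xna]; first by rewrite Ha; lia.
  case: (eqVneq x b) => [->|xnb]; first by rewrite Hb; lia.
  have [hxa hxb] : hh' x != a /\ hh' x != b.
    split; apply/eqP => E; [move: xnb; by rewrite -(Hinv x) E Ha eqxx | move: xna; by rewrite -(Hinv x) E Hb eqxx].
  have z e : e != a -> e != b -> w e = 0.
    move=> ea eb; case: (eqVneq (w e) 0) => // /Hthird [] E; [move: ea|move: eb]; by rewrite E eqxx.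
  by rewrite !z.
case: (eqVneq x a) => [->|xna]; first by rewrite Ha.
have hxa : hh' x != a by apply/eqP => E; move: xna; rewrite -(Hinv x) E Ha eqxx.
have z e : fconnect p x e -> e != a -> w e = 0.
  move=> xe ea; have := H1 e; rewrite xe ea andbT /=.
  by rewrite andbT => /negbT/negbNE/eqP.
rewrite !z //; exact: connect0.
Qed.
End C.

Lemma edgeE n (X : wperm n) v1 v2 a :
  edge X v1 v2 a = (wp_perm X v1 == v2) && (wp_weight X v1 == a).
Proof.
apply/existsP/andP => [[i /and3P [/eqP <- H1 H2]] | [H1 H2]]; first by split.
by exists v1; rewrite eqxx H1 H2.
Qed.

Theorem lemma2p12 (n : nat) (X : wperm n) :
  1 <= n -> total_weight X <= 2 -> same_wcycle_type X (wdagger X).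
Proof.
move=> _ Hw.
set p := wp_perm X.
set w := wp_weight X.
have Hinv := hh (@Hr1 _ p w) (@Hr2 _ p w) (@Hs1 _ p w) (@Hs2 _ p w).
have Hp := hp (@Hr1 _ p w) (@Hr2 _ p w) (@Hs1 _ p w) (@Hs2 _ p w).
have Hwt := @h_weight _ p w Hw.
rewrite /hh' in Hwt.
set h := hmap p (ra p w) (sa p w) in Hinv Hp Hwt.
exists (p^-1 * perm (can_inj Hinv))%g => v1 v2 a.
have D1 : wp_perm (wdagger X) = p^-1%g by [].
have D2 : wp_weight (wdagger X) = [ffun i => w (p^-1%g i)] by [].
have Eh : forall x, perm (can_inj Hinv) x = h x by apply: permE.
rewrite !edgeE D1 D2 ffunE !permM !Eh.
have E1 : p^-1%g (h (p^-1%g v1)) = h v1.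
  by rewrite -(Hp (p^-1%g v1)) permKV permK.
rewrite E1 (inj_eq (can_inj Hinv)) Hwt.
by rewrite -/p -/w -{1}(permKV p v2) (inj_eq (@perm_inj _ p)).
Qed.
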